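(* Let $\mathbb{K}\in\{\mathbb{R},\mathbb{C}\}$, $\star\in\{*,T\}$, $\epsilon_1,\epsilon_2\in\{1,-1\}$, and let $Q(\lambda)=\lambda^2M+\lambda D+K\in\mathbb{K}^{n\times n}[\lambda]$ satisfy $M^\star=\epsilon_1M$, $D^\star=\epsilon_2D$, $K^\star=\epsilon_1K$. Let $(\lambda_0,x_0)$ be an eigenpair of $Q(\lambda)$ with $\lambda_0\neq\epsilon_1\epsilon_2\lambda_0^\star$, and let $\tilde x_0$ be an eigenvector of $Q(\lambda)$ for the eigenvalue $\epsilon_1\epsilon_2\lambda_0^\star$. Let $X_0=[x_0\ \tilde x_0]$, $\Lambda_0=\mathrm{diag}(\lambda_0,\epsilon_1\epsilon_2\lambda_0^\star)$, and $s_0:=2\epsilon_1\epsilon_2\lambda_0^\star x_0^\star M\tilde x_0+x_0^\star D\tilde x_0$. Then $(X_0,\Lambda_0)$ is an invariant pair of $Q(\lambda)$ and $X_0^\star MX_0\Lambda_0+\epsilon_1\epsilon_2\Lambda_0^\star X_0^\star MX_0+X_0^\star DX_0=\begin{bmatrix}0&s_0\\\epsilon_2s_0^\star&0\end{bmatrix}$.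
   Context: For a matrix or vector $A$, $A^\star$ is $A^*$ (conjugate transpose) if $\star=*$ and $A^T$ if $\star=T$; for $\lambda\in\mathbb{C}$, $\lambda^\star=\overline{\lambda}$ if $\star=*$ and $\lambda^\star=\lambda$ if $\star=T$. An eigenpair $(\lambda_0,x_0)$ means $x_0\neq0$ and $(\lambda_0^2M+\lambda_0D+K)x_0=0$. A pair $(X,\Lambda)$ is an invariant pair of $Q(\lambda)$ if $MX\Lambda^2+DX\Lambda+KX=0$. *)

(* Defs.v *)
From HB Require Import structures.
From mathcomp Require Import all_boot all_order all_algebra.
From mathcomp Require Import reals.
From mathcomp Require Import complex.
Set Implicit Arguments. Unset Strict Implicit. Unset Printing Implicit Defensive.
Import Order.TTheory GRing.Theory Num.Theory.
Local Open Scope ring_scope.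

(* K^star for a matrix, where [sc] is the scalar map lambda |-> lambda^star:
   sc = conjugation for star = *, sc = id for star = T. *)
Definition mstar (F : fieldType) (sc : F -> F) (m n : nat) (A : 'M[F]_(m, n))
  : 'M[F]_(n, m) := (map_mx sc A)^T.

Definition is_eigpair (F : fieldType) (n : nat) (M D K : 'M[F]_n)
  (l : F) (x : 'cV[F]_n) : Prop :=
  x != 0 /\ (l ^+ 2 *: M + l *: D + K) *m x = 0.

Definition invariant_pair (F : fieldType) (n k : nat) (M D K : 'M[F]_n)
  (X : 'M[F]_(n, k)) (L : 'M[F]_k) : Prop :=
  M *m X *m (L *m L) + D *m X *m L + K *m X = 0.

Definition mx2 (F : fieldType) (a b c d : F) : 'M[F]_2 :=
  \matrix_(i < 2, j < 2)
    if (i == 0%N :> nat) then (if (j == 0%N :> nat) then a else b)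
    else (if (j == 0%N :> nat) then c else d).

Definition cor26 (F : fieldType) (sc : F -> F) : Prop :=
  forall (n : nat) (e1 e2 : F) (M D K : 'M[F]_n) (l0 : F) (x0 xt : 'cV[F]_n),
    (e1 = 1 \/ e1 = -1) -> (e2 = 1 \/ e2 = -1) ->
    mstar sc M = e1 *: M -> mstar sc D = e2 *: D -> mstar sc K = e1 *: K ->
    is_eigpair M D K l0 x0 ->
    l0 != e1 * e2 * sc l0 ->
    is_eigpair M D K (e1 * e2 * sc l0) xt ->
    let X0 : 'M[F]_(n, 2) := row_mx x0 xt in
    let L0 : 'M[F]_2 := mx2 l0 0 0 (e1 * e2 * sc l0) in
    let s0 : F := 2%:R * e1 * e2 * sc l0 * (mstar sc x0 *m M *m xt) 0 0
                  + (mstar sc x0 *m D *m xt) 0 0 in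
    invariant_pair M D K X0 L0 /\
    mstar sc X0 *m M *m X0 *m L0 + (e1 * e2) *: (mstar sc L0 *m mstar sc X0 *m M *m X0)
      + mstar sc X0 *m D *m X0
    = mx2 0 s0 (e2 * sc s0) 0.

(* Main.v *)
Require Import Defs.
From HB Require Import structures.
From mathcomp Require Import all_boot all_order all_algebra.
From mathcomp Require Import reals complex ring.
Import GRing.Theory Num.Theory.
Local Open Scope ring_scope.

Lemma mx2_block (F : fieldType) (a b c d : F) :
  mx2 a b c d = block_mx (a%:M : 'M_1) (b%:M : 'M_1) (c%:M : 'M_1) (d%:M : 'M_1).
Proof.
apply/matrixP => -[[|[|i]] Hi] -[[|[|j]] Hj] //; rewrite !mxE /=.
all: case: splitP => k; rewrite (ord1 k) /= => Hk //; rewrite mxE; case: splitP => k'; rewrite (ord1 k') /= => Hk' //; rewrite !mxE /= mulr1n.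
all: by [].
Qed.

Section Gen.
Variables (F : fieldType) (sc : {rmorphism F -> F}).
Hypothesis scK : involutive sc.

Lemma mstarM m n p (A : 'M[F]_(m,n)) (B : 'M[F]_(n,p)) :
  mstar sc (A *m B) = mstar sc B *m mstar sc A.
Proof. by rewrite /mstar map_mxM trmx_mul. Qed.

Lemma mstarK m n (A : 'M[F]_(m,n)) : mstar sc (mstar sc A) = A.
Proof. by apply/matrixP=> i j; rewrite !mxE scK. Qed.

Lemma mstarZ m n a (A : 'M[F]_(m,n)) : mstar sc (a *: A) = sc a *: mstar sc A.
Proof. by apply/matrixP=> i j; rewrite !mxE rmorphM. Qed.

Lemma mstar_row m n1 n2 (A : 'M[F]_(m,n1)) (B : 'M[F]_(m,n2)) :
  mstar sc (row_mx A B) = col_mx (mstar sc A) (mstar sc B).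
Proof. by rewrite /mstar map_row_mx tr_row_mx. Qed.

Lemma mstar_mx2 (a b c d : F) :
  mstar sc (mx2 a b c d) = mx2 (sc a) (sc c) (sc b) (sc d).
Proof. by apply/matrixP => -[[|[|i]] Hi] -[[|[|j]] Hj] //; rewrite !mxE /=. Qed.

Local Notation bil u A v := ((mstar sc u *m A *m v) 0 0).

Lemma bilJ n (u v : 'cV[F]_n) (A : 'M[F]_n) : sc (bil u A v) = bil v (mstar sc A) u.
Proof.
have -> : sc (bil u A v) = (mstar sc (mstar sc u *m A *m v)) 0 0 by rewrite !mxE.
by rewrite !mstarM mstarK mulmxA.
Qed.

Lemma bilZ n (u v : 'cV[F]_n) (A : 'M[F]_n) c : bil u (c *: A) v = c * bil u A v.
Proof. by rewrite -scalemxAr -scalemxAl mxE. Qed.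

Lemma e_add (A B : 'M[F]_1) : (A + B) 0 0 = A 0 0 + B 0 0. Proof. by rewrite mxE. Qed.
Lemma e_scale a (A : 'M[F]_1) : (a *: A) 0 0 = a * A 0 0. Proof. by rewrite mxE. Qed.
Lemma e_mulsc a (A : 'M[F]_1) : (A *m a%:M) 0 0 = A 0 0 * a.
Proof. by rewrite mul_mx_scalar e_scale mulrC. Qed.
Lemma e_scmul a (A : 'M[F]_1) : (a%:M *m A) 0 0 = a * A 0 0.
Proof. by rewrite mul_scalar_mx e_scale. Qed.
Lemma e_sc a : (a%:M : 'M[F]_1) 0 0 = a. Proof. by rewrite mxE mulr1n. Qed.
Lemma e_0 : (0 : 'M[F]_1) 0 0 = 0. Proof. by rewrite mxE. Qed.
Lemma mx1_ext (A B : 'M[F]_1) : A 0 0 = B 0 0 -> A = B.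
Proof. by move=> h; apply/matrixP=> i j; rewrite !ord1. Qed.

Lemma sc_pm1 e : e = 1 \/ e = -1 -> sc e = e.
Proof. by case=> ->; rewrite ?rmorph1 ?rmorphN1. Qed.

Lemma eig_form n e1 e2 (M D K : 'M[F]_n) l (x : 'cV[F]_n) :
  (e1 = 1 \/ e1 = -1) -> (e2 = 1 \/ e2 = -1) ->
  mstar sc M = e1 *: M -> mstar sc D = e2 *: D -> mstar sc K = e1 *: K ->
  (l ^+ 2 *: M + l *: D + K) *m x = 0 -> l != e1 * e2 * sc l ->
  (l + e1 * e2 * sc l) * bil x M x + bil x D x = 0.
Proof.
move=> he1 he2 HM HD HK Hq Hl.
have E : mstar sc x *m ((l ^+ 2 *: M + l *: D + K) *m x) =
   l ^+ 2 *: (mstar sc x *m M *m x) + l *: (mstar sc x *m D *m x) + (mstar sc x *m K *m x).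
  by rewrite !mulmxDl !mulmxDr -!scalemxAl -!scalemxAr !mulmxA.
have h1 := congr1 (fun m : 'M[F]_1 => m 0 0) E; rewrite /= Hq mulmx0 e_0 !e_add !e_scale in h1.
have h2 := congr1 sc h1; rewrite rmorph0 !rmorphD !rmorphM ?rmorphXn !bilJ HM HD HK !bilZ in h2.
set a := bil x M x in h1 h2 *; set g := bil x D x in h1 h2 *; set k := bil x K x in h1 h2 *.
set s := sc l in h2 Hl *.
have H : (l - e1 * e2 * s) * ((l + e1 * e2 * s) * a + g) =
   (l ^+ 2 * a + l * g + k) - e1 * (s ^+ 2 * (e1 * a) + s * (e2 * g) + e1 * k).
  by case: he1 => ->; case: he2 => ->; ring.
rewrite -h1 -h2 in H.
apply/eqP; move: H; rewrite mulr0 subrr => /eqP; rewrite mulf_eq0 subr_eq0 (negbTE Hl) /=.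
by [].
Qed.

Lemma cor26_gen : cor26 sc.
Proof.
move=> n e1 e2 M D K l0 x0 xt he1 he2 HM HD HK [_ H0] Hl [_ Ht] X0 L0 s0.
have F0 := @eig_form n e1 e2 M D K _ _ he1 he2 HM HD HK H0 Hl.
have Ft : (e1 * e2 * sc l0) != e1 * e2 * sc (e1 * e2 * sc l0).
  rewrite !rmorphM scK (sc_pm1 _ he1) (sc_pm1 _ he2).
  have -> : e1 * e2 * (e1 * e2 * l0) = l0 by case: he1 => ->; case: he2 => ->; ring.
  by rewrite eq_sym.
have {}Ft := @eig_form n e1 e2 M D K _ _ he1 he2 HM HD HK Ht Ft.
split.
  rewrite /invariant_pair /L0 /X0 mx2_block (mulmx_block (m1:=1) (m2:=1) (n1:=1) (n2:=1) (p1:=1) (p2:=1)) !(mul_mx_row (p1:=1) (p2:=1)) !(mul_row_block (n1:=1) (n2:=1) (p1:=1) (p2:=1)).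
  rewrite !raddf0 ?mul0mx ?mulmx0 !addr0 !add0r -!scalar_mxM !mul_mx_scalar !(add_row_mx (n1:=1) (n2:=1)).
  have -> : (0 : 'M[F]_(n,2)) = row_mx (0 : 'M_(n,1)) (0 : 'M_(n,1)) by rewrite row_mx0.
  apply: (congr2 (@row_mx F n 1 1)).
    by rewrite !mulmx0 addr0 -H0 !mulmxDl -!scalemxAl expr2.
  by rewrite !mulmx0 add0r -Ht !mulmxDl -!scalemxAl expr2.
have Gram : forall A : 'M[F]_n, mstar sc X0 *m A *m X0 =
   block_mx (mstar sc x0 *m A *m x0) (mstar sc x0 *m A *m xt)
            (mstar sc xt *m A *m x0) (mstar sc xt *m A *m xt).
  move=> A; rewrite /X0 (mstar_row _ 1 1) (mul_col_mx (m1:=1) (m2:=1)) (mul_col_mx (m1:=1) (m2:=1)).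
  by rewrite !(mul_mx_row (p1:=1) (p2:=1)) (block_mxEv (m1:=1) (m2:=1) (n1:=1) (n2:=1)).
have -> : mstar sc L0 *m mstar sc X0 *m M *m X0 = mstar sc L0 *m (mstar sc X0 *m M *m X0)
  by rewrite !mulmxA.
rewrite !Gram /L0 mstar_mx2 !mx2_block.
rewrite !(mulmx_block (m1:=1) (m2:=1) (n1:=1) (n2:=1) (p1:=1) (p2:=1)).
rewrite (scale_block_mx (m1:=1) (m2:=1) (n1:=1) (n2:=1)) !(add_block_mx (m1:=1) (m2:=1) (n1:=1) (n2:=1)).
apply: (f_equal4 (@block_mx F 1 1 1 1)); apply: mx1_ext;
  rewrite !raddf0 ?mul0mx ?mulmx0 ?addr0 ?add0r !(e_add, e_scale, e_mulsc, e_scmul, e_sc, e_0).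
- by apply: (etrans _ F0); ring.
- by rewrite /s0; ring.
- rewrite /s0 !rmorphD !rmorphM rmorph_nat scK !bilJ HM HD !bilZ (sc_pm1 _ he1) (sc_pm1 _ he2).
  by case: he1 => ->; case: he2 => ->; ring.
- by apply: (etrans _ Ft); ring.
Qed.
End Gen.

Theorem corollary2p6 (R : realType) :
  cor26 (fun x : R => x) /\
  cor26 (fun x : R[i] => conjc x) /\
  cor26 (fun x : R[i] => x).
Proof.
split; [|split].
- exact: (@cor26_gen R (idfun : {rmorphism R -> R}) (fun x => erefl)).
- exact: (@cor26_gen R[i] (conjc : {rmorphism R[i] -> R[i]}) (@conjcK R)).
- exact: (@cor26_gen R[i] (idfun : {rmorphism R[i] -> R[i]}) (fun x => erefl)).
Qed.
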